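(* Let $n\ge7$ and $G\cong K_3\cup K_{1,n-4}$ (a graph on $n$ vertices). Then $q(\overline{G})=2$, and $\overline G$ has a matrix realization in $S(\overline G)$ with exactly two distinct eigenvalues that has the Strong Spectral Property.
   Context: $\overline G$ denotes the complement of $G$; $K_{1,n-4}$ is a star and $\cup$ is disjoint union. For a graph $H$ on $n$ vertices, $S(H)$ is the set of real symmetric matrices $A$ with $a_{ij}\ne0$ ($i\ne j$) iff $ij\in E(H)$, diagonal unrestricted, and $q(H)$ is the minimum number of distinct eigenvalues over $S(H)$. A symmetric $A$ has the Strong Spectral Property if the only symmetric $X$ with $A\circ X=O$, $I\circ X=O$, $AX=XA$ is $X=O$ ($\circ$ the entrywise product). *)

(* Defs.v *)
From HB Require Import structures.
From mathcomp Require Import all_boot all_order all_algebra.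
From mathcomp Require Import perm Rstruct.
From Stdlib Require Import Rdefinitions.
Set Implicit Arguments. Unset Strict Implicit. Unset Printing Implicit Defensive.
Import Order.TTheory GRing.Theory Num.Theory.
Local Open Scope ring_scope.

Definition simple_graph n (e : rel 'I_n) : Prop :=
  (forall i j, e i j = e j i) /\ (forall i, e i i = false).

Definition compl_graph n (e : rel 'I_n) : rel 'I_n :=
  fun i j => (i != j) && ~~ e i j.

Definition graph_iso n (e e' : rel 'I_n) : Prop :=
  exists f : {perm 'I_n}, forall i j, e (f i) (f j) = e' i j.

(* The model graph K_3 \cup K_{1,n-4} on 'I_n: {0,1,2} is a triangle,
   vertex 3 is the centre of a star whose leaves are 4, ..., n-1. *)
Definition K3_star n : rel 'I_n :=
  fun i j => let a := nat_of_ord i in let b := nat_of_ord j in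
    (a != b) &&
    [|| ltn a 3 && ltn b 3, (a == 3%N) && leq 4 b | (b == 3%N) && leq 4 a].

Definition S_graph n (H : rel 'I_n) (A : 'M[R]_n) : Prop :=
  A^T = A /\ forall i j, i != j -> (A i j != 0 <-> H i j).

Definition num_distinct_eig n (A : 'M[R]_n) (k : nat) : Prop :=
  exists s : seq R, [/\ uniq s, (forall a, eigenvalue A a <-> a \in s)
                      & size s = k].

Definition q_eq n (H : rel 'I_n) (k : nat) : Prop :=
  (exists A, S_graph H A /\ num_distinct_eig A k) /\
  (forall A m, S_graph H A -> num_distinct_eig A m -> leq k m).

Definition SSP n (A : 'M[R]_n) : Prop :=
  forall X : 'M[R]_n, X^T = X ->
    (forall i j, A i j * X i j = 0) ->
    (forall i, X i i = 0) ->
    A *m X = X *m A -> X = 0.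

(* Main.v *)
Require Import Defs.
From HB Require Import structures.
From mathcomp Require Import all_boot all_order all_algebra.
From mathcomp Require Import perm Rstruct.
From mathcomp Require Import complex spectral sesquilinear.
From mathcomp Require Import ring lra zify.
From Stdlib Require Import Rdefinitions.
Set Implicit Arguments. Unset Strict Implicit. Unset Printing Implicit Defensive.
Import Order.TTheory GRing.Theory Num.Theory.
Local Open Scope ring_scope.

Local Notation C := (R[i]).
Definition toC (x : R) : C := (x%:C)%C.

Lemma sym_spec n (A : 'M[R]_n) : A^T = A ->
  exists (d : 'I_n -> R) (P : 'M[C]_n), [/\ P \in unitmx,
   map_mx toC A = invmx P *m diag_mx (\row_j toC (d j)) *m P
   & forall j, eigenvalue A (d j)].
Proof.
move=> sA.
set Ac := map_mx toC A.
have Areal : Ac \is a realmx.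
  by apply/mxOverP => i j; rewrite mxE /toC; apply/Creal_ReP; rewrite -complexRe.
have Asym : Ac \is symmetricmx.
  apply/is_hermitianmxP; rewrite expr0 scale1r.
  apply/matrixP => i j; rewrite !mxE.
  by have := congr1 (fun M : 'M[R]_n => M j i) sA; rewrite mxE /= => ->.
have Aherm := realsym_hermsym Asym Areal.
have /hermitian_normalmx /orthomx_spectralP Aeq := Aherm.
have dreal := hermitian_spectral_diag_real Aherm.
set P := spectralmx Ac in Aeq. set D := spectral_diag Ac in Aeq dreal.
have dE : forall j, toC (complex.Re (D 0 j)) = D 0 j.
  move=> j; rewrite /toC complexRe; apply/Creal_ReP.
  by move/mxOverP: dreal; apply.
exists (fun j => complex.Re (D 0 j)), P; split.
- exact: spectral_unit.
- by rewrite Aeq; congr (_ *m diag_mx _ *m _); apply/rowP => j; rewrite mxE dE.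
move=> j.
have Pu : P \in unitmx by exact: spectral_unit.
have PA : P *m Ac = diag_mx D *m P.
  by rewrite {1}Aeq !mulmxA mulmxV // mul1mx.
have : eigenvalue Ac (D 0 j).
  apply/eigenvalueP; exists (row j P).
    by rewrite -row_mul PA mul_diag_mx; apply/rowP => k; rewrite !mxE.
  apply/negP => /eqP r0.
  have : (delta_mx 0 j : 'rV[C]_n) *m P *m invmx P = 0 by rewrite -rowE r0 mul0mx.
  rewrite mulmxK // => /matrixP /(_ 0 j); rewrite !mxE !eqxx /=.
  by move/eqP; rewrite oner_eq0.
rewrite -dE !eigenvalue_root_char /Ac.
rewrite -map_char_poly.
by rewrite fmorph_root.
Qed.

Lemma q_lower n (A : 'M[R]_n) i j m : A^T = A -> i != j -> A i j != 0 ->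
  num_distinct_eig A m -> leq 2 m.
Proof.
move=> sA nij Anz [s [us eigs sz]].
have [d [P [Pu AE deig]]] := sym_spec sA.
have ds : forall k, d k \in s by move=> k; apply/eigs.
case: s us eigs sz ds => [|a [|b s]] //= us eigs sz ds; last by rewrite -sz.
  by have := ds i.
have dk : forall k, d k = a by move=> k; have := ds k; rewrite inE => /eqP.
have : map_mx toC A = (toC a)%:M.
  rewrite AE.
  have -> : diag_mx (\row_j0 toC (d j0)) = (toC a)%:M.
    by apply/matrixP => k l; rewrite !mxE dk.
  by rewrite mul_mx_scalar -scalemxAl mulVmx // scalemx1.
move/matrixP => /(_ i j); rewrite !mxE (negPf nij) /= /toC => -[].
by move=> Aij; move: Anz; rewrite Aij eqxx.
Qed.
Definition nu1 (a : nat) : R := if a == 0%nat then 1 else if a == 1%nat then -4 else 3.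
Definition nu2 (a : nat) : R := if a == 0%nat then 4 else if a == 1%nat then -9 else 5.
Definition nu3 (a : nat) : R := if a == 0%nat then 9 else if a == 1%nat then -1 else -8.

Definition uf (w : R) (i a : nat) : R :=
  if leq (S i) 3%nat then (if i == a then 1/2 else 0)
  else if i == 3%nat then 1/2
  else if i == 4%nat then nu1 a / 14
  else if i == 5%nat then nu2 a / 14
  else nu3 a * w.

Definition Bf w i j := uf w i 0 * uf w j 0 + uf w i 1 * uf w j 1 + uf w i 2 * uf w j 2.

Definition K3f (i j : nat) : bool :=
  [|| leq (S i) 3%nat && leq (S j) 3%nat, (i == 3%nat) && leq 4%nat j | (j == 3%nat) && leq 4%nat i].

Lemma uf6 w i a : leq 6%nat i -> uf w i a = uf w 6 a.
Proof.
rewrite /uf; case: i => [|[|[|[|[|[|i]]]]]] //.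
Qed.

Lemma K3f6l i j : leq 6%nat i -> K3f i j = K3f 6 j.
Proof. by case: i => [|[|[|[|[|[|i]]]]]] //. Qed.
Lemma K3f6r i j : leq 6%nat j -> K3f i j = K3f i 6.
Proof. rewrite /K3f; case: j => [|[|[|[|[|[|j]]]]]] //= _; by rewrite !andbF. Qed.

Lemma key_small w (ci cj : nat) : 0 < w -> leq ci 6 -> leq cj 6 ->
  (ci != cj) || (ci == 6%nat) -> (Bf w ci cj != 0) = ~~ K3f ci cj.
Proof.
move=> w0.
case: ci => [|[|[|[|[|[|[|ci]]]]]]] //= _;
case: cj => [|[|[|[|[|[|[|cj]]]]]]] //= _ _;
rewrite /Bf /uf /nu1 /nu2 /nu3 /K3f /=;
first [ apply/negbF/eqP; ring | apply/eqP => H; nra ].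
Qed.

Definition cl (i : nat) : nat := if leq 6%nat i then 6%nat else i.

Lemma uf_cl w i a : uf w i a = uf w (cl i) a.
Proof. rewrite /cl; case: ifP => // h; exact: uf6. Qed.

Lemma K3f_cl i j : K3f i j = K3f (cl i) (cl j).
Proof.
rewrite /cl; case: ifP => hi; case: ifP => hj //.
- by rewrite K3f6l // K3f6r.
- exact: K3f6l.
- exact: K3f6r.
Qed.

Lemma key w i j : 0 < w -> i != j -> (Bf w i j != 0) = ~~ K3f i j.
Proof.
move=> w0 nij.
have -> : Bf w i j = Bf w (cl i) (cl j) by rewrite /Bf !(uf_cl w i) !(uf_cl w j).
rewrite K3f_cl; apply: key_small => //.
- by rewrite /cl; case: ifP => // /negbT; rewrite -ltnNge => /ltnW.
- by rewrite /cl; case: ifP => // /negbT; rewrite -ltnNge => /ltnW.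
rewrite /cl; case: ifP => hi; case: ifP => hj /=; rewrite ?eqxx ?orbT //; apply/orP; left.
  by apply/eqP => e; rewrite e in hi.
exact: nij.
Qed.

Lemma sum_one N (F : 'I_N -> R) k0 :
  (forall k, k != k0 -> F k = 0) -> \sum_k F k = F k0.
Proof. by move=> h; rewrite (bigD1 k0) //= big1 ?addr0 // => k; apply: h. Qed.

Lemma sum_three N (F : 'I_N -> R) k0 k1 k2 : k0 != k1 -> k0 != k2 -> k1 != k2 ->
  (forall k, k != k0 -> k != k1 -> k != k2 -> F k = 0) ->
  \sum_k F k = F k0 + F k1 + F k2.
Proof.
move=> h01 h02 h12 h.
rewrite (bigD1 k0) // (bigD1 k1) /=; last by rewrite eq_sym.
rewrite (bigD1 k2) /=; last by rewrite !(eq_sym k2) h12 h02.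
rewrite big1 ?addr0 ?addrA // => k /andP [/andP [hk0 hk1] hk2].
exact: h.
Qed.

Section Model.
Variables (m : nat) (w : R).
Hypothesis w0 : 0 < w.
Hypothesis hw : (m.+1)%:R * (w * w) = 1/196.

Definition Um : 'M[R]_(m.+3.+4, 3) := \matrix_(i, a) uf w i a.
Definition Bm := Um *m trmx Um.

Lemma BmE i j : Bm i j = Bf w i j.
Proof.
rewrite /Bm mxE /Bf !big_ord_recr big_ord0 /= add0r !mxE.
done.
Qed.

Lemma UtU : trmx Um *m Um = 1%:M.
Proof.
apply/matrixP => a a'; rewrite !mxE.
have -> : \sum_j (trmx Um) a j * Um j a' = \sum_(0 <= i < m.+3.+4) uf w i a * uf w i a'.
  by rewrite big_mkord; apply: eq_bigr => j _; rewrite !mxE.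
rewrite (big_cat_nat _ (n := 6)) //=.
have -> : \sum_(6 <= i < m.+3.+4) uf w i a * uf w i a' = \sum_(6 <= i < m.+3.+4) uf w 6 a * uf w 6 a'.
  by apply: eq_big_nat => i /andP [h _]; rewrite !(uf6 w _ h).
rewrite sumr_const_nat /index_iota /= !big_cons big_nil subSS.
rewrite -mulr_natl.
have -> : subn m.+2.+4 5 = m.+1 by [].
case: a => [[|[|[|//]]] ?]; case: a' => [[|[|[|//]]] ?];
rewrite /uf /nu1 /nu2 /nu3 /=; have := hw; set k := (m.+1)%:R => hk; nra.
Qed.


Lemma Bm_sym : trmx Bm = Bm.
Proof. by rewrite /Bm trmx_mul trmxK. Qed.

Lemma Bm_idem : Bm *m Bm = Bm.
Proof. by rewrite /Bm mulmxA -(mulmxA Um) UtU mulmx1. Qed.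

Let N := m.+3.+4.
Let o0 : 'I_N := @Ordinal N 0 isT.
Let o1 : 'I_N := @Ordinal N 1 isT.
Let o2 : 'I_N := @Ordinal N 2 isT.
Let o3 : 'I_N := @Ordinal N 3 isT.
Let o4 : 'I_N := @Ordinal N 4 isT.
Let o5 : 'I_N := @Ordinal N 5 isT.

Lemma Bm00 : Bm o0 o0 = 1/4.
Proof. rewrite BmE /Bf /uf /=; lra. Qed.

Lemma Bm_SSP : SSP Bm.
Proof.
move=> X Xs Hz Hd Hc.
have Xsym i j : X i j = X j i.
  by have := congr1 (fun M : 'M[R]_N => M j i) Xs; rewrite mxE.
have Xsupp i j : X i j != 0 -> K3f i j.
  move=> nz; case: (eqVneq i j) => [e|nij]; first by move: nz; rewrite e Hd eqxx.
  apply/negPn; rewrite -(key w0 nij) -BmE; apply/negP => bnz.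
  by move: (Hz i j) => /eqP; rewrite mulf_eq0 (negPf bnz) (negPf nz).
have XZ (i j : 'I_N) : ~~ K3f i j -> X i j = 0.
  by move=> h; apply/eqP; apply/negPn/negP => /Xsupp; rewrite (negPf h).
have E (t l : 'I_N) : leq (S t) 3%nat -> leq 4%nat l ->
   Bf w t 3 * X o3 l = X t o0 * Bf w 0 l + X t o1 * Bf w 1 l + X t o2 * Bf w 2 l.
  move=> ht hl.
  have := congr1 (fun M : 'M[R]_N => M t l) Hc; rewrite !mxE.
  rewrite (sum_one (k0 := o3)); last first.
    move=> k nk; rewrite (XZ k l) ?mulr0 //.
    rewrite /K3f; apply/negP => /or3P [/andP [_ h]| /andP [h _] | /andP [h _]].
    - by move: hl h; lia.
    - by move: nk; rewrite -(inj_eq val_inj) /= => /eqP; move: h; lia.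
    - by move: hl h; lia.
  rewrite (@sum_three _ _ o0 o1 o2) //; last first.
    move=> k n0 n1 n2; rewrite (XZ t k) ?mul0r //.
    rewrite /K3f; apply/negP => /or3P [/andP [_ h]| /andP [h _] | /andP [_ h]].
    - move: n0 n1 n2; rewrite -!(inj_eq val_inj) /=.
      by case: (nat_of_ord k) h => [|[|[|]]].
    - by move: ht h; lia.
    - by move: ht h; lia.
  by rewrite !BmE.
have Xd0 : X o0 o0 = 0 := Hd o0.
have Xd1 : X o1 o1 = 0 := Hd o1.
have Xd2 : X o2 o2 = 0 := Hd o2.
have X10 : X o1 o0 = X o0 o1 := Xsym _ _.
have X20 : X o2 o0 = X o0 o2 := Xsym _ _.
have X21 : X o2 o1 = X o1 o2 := Xsym _ _.
have e04 := E o0 o4 isT isT. have e14 := E o1 o4 isT isT. have e24 := E o2 o4 isT isT.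
have e05 := E o0 o5 isT isT. have e15 := E o1 o5 isT isT. have e25 := E o2 o5 isT isT.
move: e04 e14 e24 e05 e15 e25; rewrite /Bf /uf /nu1 /nu2 /= Xd0 Xd1 Xd2 X10 X20 X21.
move=> e04 e14 e24 e05 e15 e25.
have xa : X o0 o1 = 0 by lra.
have xb : X o0 o2 = 0 by lra.
have xc : X o1 o2 = 0 by lra.
have Y (l : 'I_N) : leq 4%nat l -> X o3 l = 0.
  move=> hl; have := E o0 l isT hl.
  rewrite Xd0 xa xb !mul0r !addr0 /Bf /uf /=; lra.
apply/matrixP => i j; rewrite mxE.
case: (eqVneq (X i j) 0) => [//|nz]; have k3 := Xsupp _ _ nz; move: k3 nz.
have vi : forall (k : 'I_N), leq (S k) 3%nat -> k = o0 \/ k = o1 \/ k = o2.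
  move=> k hk; case: k hk => [[|[|[|k]]] hk] //= _.
  - by left; apply: val_inj.
  - by right; left; apply: val_inj.
  - by right; right; apply: val_inj.
rewrite /K3f => /or3P [/andP [hi hj] | /andP [hi hj] | /andP [hj hi]].
- have [->|[->|->]] := vi i hi; have [->|[->|->]] := vi j hj;
  by rewrite ?Xd0 ?Xd1 ?Xd2 ?X10 ?X20 ?X21 ?xa ?xb ?xc eqxx.
- have -> : i = o3 by apply: val_inj; apply/eqP.
  by rewrite Y // eqxx.
- have -> : j = o3 by apply: val_inj; apply/eqP.
  by rewrite Xsym Y // eqxx.
Qed.
End Model.
Definition conjm n (g : {perm 'I_n}) (B : 'M[R]_n) : 'M[R]_n :=
  \matrix_(i, j) B (g i) (g j).

Lemma conj_mul n (g : {perm 'I_n}) (B C : 'M[R]_n) :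
  conjm g (B *m C) = conjm g B *m conjm g C.
Proof.
apply/matrixP => i j; rewrite !mxE.
rewrite (reindex_inj (@perm_inj _ g)) /=.
by apply: eq_bigr => k _; rewrite !mxE.
Qed.

Lemma conj_tr n (g : {perm 'I_n}) (B : 'M[R]_n) : trmx (conjm g B) = conjm g (trmx B).
Proof. by apply/matrixP => i j; rewrite !mxE. Qed.

Lemma conjK n (g : {perm 'I_n}) (B : 'M[R]_n) : conjm (g^-1)%g (conjm g B) = B.
Proof. by apply/matrixP => i j; rewrite !mxE !permKV. Qed.

Lemma conj0 n (g : {perm 'I_n}) : conjm g 0 = 0.
Proof. by apply/matrixP => i j; rewrite !mxE. Qed.

Lemma SSP_conj n (g : {perm 'I_n}) (B : 'M[R]_n) : SSP B -> SSP (conjm g B).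
Proof.
move=> hB X Xs Hz Hd Hc.
pose Y := conjm (g^-1)%g X.
have : Y = 0.
  apply: hB.
  - by rewrite /Y conj_tr Xs.
  - move=> i j; rewrite /Y mxE.
    by have := Hz ((g^-1)%g i) ((g^-1)%g j); rewrite mxE !permKV.
  - by move=> i; rewrite /Y mxE Hd.
  - rewrite /Y -{1}(conjK g B) -{2}(conjK g B) -!conj_mul Hc //.
by move=> Y0; rewrite -(conjK (g^-1)%g X) -/Y Y0 conj0.
Qed.

Lemma eig_proj n (P : 'M[R]_n) i : P *m P = P -> P i i != 0 -> P i i != 1 ->
  num_distinct_eig P 2.
Proof.
move=> PP h0 h1; exists [:: 0; 1]; split => //=.
  by rewrite inE eq_sym oner_eq0.
move=> a; split.
  move/eigenvalueP => [v vP vnz].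
  have : (a * a - a) *: v = 0.
    have e1 : v *m P *m P = (a * a) *: v by rewrite vP -scalemxAl vP scalerA.
    have e2 : v *m P *m P = a *: v by rewrite -mulmxA PP vP.
    by rewrite scalerBl -e1 -e2 subrr.
  move/eqP; rewrite scaler_eq0 (negPf vnz) orbF => /eqP e.
  have : a * (a - 1) = 0 by rewrite mulrBr mulr1.
  move/eqP; rewrite mulf_eq0 subr_eq0 !inE => /orP [->|->] //; by rewrite orbT.
rewrite !inE => /orP [/eqP ->|/eqP ->]; apply/eigenvalueP.
  exists (row i (1%:M - P)).
    by rewrite -row_mul mulmxBl mul1mx PP subrr scale0r; apply/rowP => k; rewrite !mxE.
  apply/negP => /eqP /rowP /(_ i); rewrite !mxE eqxx /= => /eqP.
  by rewrite subr_eq0 eq_sym (negPf h1).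
exists (row i P); first by rewrite -row_mul PP scale1r.
by apply/negP => /eqP /rowP /(_ i); rewrite !mxE => /eqP; rewrite (negPf h0).
Qed.

Lemma K3E N (a b : 'I_N) : K3_star a b = (a != b) && K3f a b.
Proof. by []. Qed.

Lemma main7 m (G : rel 'I_(m.+3.+4)) :
  simple_graph G -> graph_iso G (@K3_star _) ->
  q_eq (compl_graph G) 2 /\
  exists A : 'M[R]_(m.+3.+4),
    [/\ S_graph (compl_graph G) A, num_distinct_eig A 2 & SSP A].
Proof.
move=> _ [f hf].
pose N := m.+3.+4.
pose o0 : 'I_N := @Ordinal N 0 isT.
pose o3 : 'I_N := @Ordinal N 3 isT.
pose b := Num.sqrt ((m.+1)%:R : R).
have b0 : 0 < b by rewrite sqrtr_gt0 ltr0n.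
pose w := 1 / (14 * b).
have w0 : 0 < w by rewrite divr_gt0 // mulr_gt0.
have hw : (m.+1)%:R * (w * w) = 1/196.
  have bb : b * b = (m.+1)%:R by rewrite -expr2 sqr_sqrtr // ler0n.
  rewrite -bb /w; field; lra.
pose g := (f^-1)%g.
pose A := conjm g (Bm m w).
have Gg i j : G i j = K3_star (g i) (g j).
  by rewrite -hf !permKV.
have SA : S_graph (compl_graph G) A.
  split; first by rewrite /A conj_tr Bm_sym.
  move=> i j nij; rewrite /compl_graph nij /= Gg K3E.
  have ngij : g i != g j by rewrite (inj_eq (@perm_inj _ g)).
  by rewrite ngij /= /A mxE BmE -(key w0 ngij).
have eigA : num_distinct_eig A 2.
  have Aii : A (f o0) (f o0) = 1/4 by rewrite /A mxE /g !permK Bm00.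
  apply: (@eig_proj _ _ (f o0)); rewrite ?Aii.
  - by rewrite /A -conj_mul Bm_idem.
  - by apply/eqP; lra.
  - by apply/eqP; lra.
split; first split.
- by exists A; split => //; exact: eigA.
- move=> A' k [sA' pA'] nk.
  have nf : f o0 != f o3 by rewrite (inj_eq (@perm_inj _ f)).
  apply: (q_lower sA' nf _ nk).
  by apply/(pA' _ _ nf); rewrite /compl_graph nf /= hf.
exists A; split => //.
by apply: SSP_conj; apply: Bm_SSP.
Qed.

Theorem mainTheorem17 (n : nat) (G : rel 'I_n) :
  leq 7 n -> simple_graph G -> graph_iso G (@K3_star n) ->
  q_eq (compl_graph G) 2 /\
  exists A : 'M[R]_n,
    [/\ S_graph (compl_graph G) A, num_distinct_eig A 2 & SSP A].
Proof.
case: n G => [|[|[|[|[|[|[|m]]]]]]] G // _.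
exact: main7.
Qed.
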